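(* Let $(B,T)$ be an $n$-string tangle diagram which is adequate. Then the link diagram $L_T$ is adequate.
   Context: A link diagram is a generic projection of a link to $S^2$ with over/under information at each double point (crossing). At each crossing there are two ways to resolve: the $A$-resolution and the $A^{-1}$-resolution (Kauffman's convention: the $A$-resolution joins the two regions near the crossing that are swept out when the over-strand is rotated counterclockwise, and the $A^{-1}$-resolution joins the other two). Resolving every crossing by the $A$-resolution (resp. $A^{-1}$-resolution) yields a disjoint collection of circles called the all-$A$ (resp. all-$A^{-1}$) resolution; at each former crossing one records a grey segment joining the two arcs of the resolution that came from that crossing. A link diagram is $A$-adequate (resp. $A^{-1}$-adequate) if every grey segment of the all-$A$ (resp. all-$A^{-1}$) resolution has its two endpoints on distinct circles; it is adequate if it is both $A$-adequate and $A^{-1}$-adequate. An $n$-string tangle diagram $(B,T)$ is a diagram of a disk $B$ together with a set $T$ of $n$ arcs in $B$ (with crossings) whose $2n$ endpoints lie on $\partial B$ and are numbered $1,\dots,2n$ clockwise. It is adequate if, however the endpoints of $T$ are joined by pairwise disjoint planar arcs outside $B$, the resulting link diagram is adequate. Given $(B,T)$, let $(B^*,T^* )$ be its mirror image, with the endpoints of $T^*$ numbered $1,\dots,2n$ counterclockwise; $L_T$ is the link diagram obtained by gluing $B$ and $B^*$ along their boundaries so that endpoint $j$ of $T$ is attached to endpoint $j$ of $T^*$ for every $j$. *)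

(* Defs.v *)
From HB Require Import structures.
From mathcomp Require Import all_boot.
Set Implicit Arguments. Unset Strict Implicit. Unset Printing Implicit Defensive.

(* A (generalised) diagram has a finite set of darts (half-edge ends) and a  *)
(* finite set of crossings.  Each crossing c owns four darts                 *)
(* [slot c 0], [slot c 1], [slot c 2], [slot c 3], listed in COUNTERCLOCKWISE *)
(* order around c, with the convention that slots 0,2 lie on the            *)
(* under-strand and slots 1,3 on the over-strand (every crossing can be      *)
(* labelled this way).  [edge] is the involution joining the two ends of     *)
(* each edge of the diagram, and [pass] joins darts at 2-valent points       *)
(* (points where an edge simply passes through, e.g. glued tangle endpoints) *)
Record diagram := Diagram {
  dart : finType;
  cross : finType;
  slot : cross -> 'I_4 -> dart;
  edge : dart -> dart;
  pass : dart -> dart }.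

(* Resolution at one crossing: b = true is Kauffman's A-resolution, which    *)
(* (rotating the over-strand {1,3} counterclockwise sweeps the regions       *)
(* between slots 1,2 and between slots 3,0) joins slots 0-1 and 2-3;         *)
(* b = false is the A^{-1}-resolution, joining slots 1-2 and 3-0.            *)
Definition res_partner (b : bool) (k : 'I_4) : 'I_4 :=
  if b then (if odd k then ord_pred k else ordS k)
  else (if odd k then ordS k else ord_pred k).

Definition smooth (d : diagram) (s : cross d -> bool) (x : dart d) : dart d :=
  match [pick p : (cross d * 'I_4)%type | @slot d p.1 p.2 == x] with
  | Some p => @slot d p.1 (res_partner (s p.1) p.2)
  | None => @pass d x
  end.

Definition res_rel (d : diagram) (s : cross d -> bool) : rel (dart d) :=
  fun x y => (y == @edge d x) || (y == smooth s x).

Definition same_circle (d : diagram) (s : cross d -> bool) (x y : dart d) :=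
  connect (res_rel s) x y.

(* All-A resolution: the grey segment at c joins the arc {slot 0, slot 1}   *)
(* to the arc {slot 2, slot 3}.                                             *)
Definition s0 : 'I_4 := @inord 3 0.
Definition s1 : 'I_4 := @inord 3 1.
Definition s2 : 'I_4 := @inord 3 2.
Definition s3 : 'I_4 := @inord 3 3.

Definition A_adequate (d : diagram) : Prop :=
  forall c : cross d,
    ~~ same_circle (fun _ => true) (@slot d c s0) (@slot d c s2).

(* All-A^{-1} resolution: the grey segment at c joins the arc               *)
(* {slot 1, slot 2} to the arc {slot 3, slot 0}.                            *)
Definition Ainv_adequate (d : diagram) : Prop :=
  forall c : cross d,
    ~~ same_circle (fun _ => false) (@slot d c s1) (@slot d c s3).

Definition adequate (d : diagram) : Prop := A_adequate d /\ Ainv_adequate d.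

(* Darts: the four slots of each crossing (crossings in C) and the 2n        *)
(* endpoints on the boundary of B, indexed 0..2n-1 in CLOCKWISE order.       *)
Definition tdart (C : finType) (n : nat) : finType :=
  ((C * 'I_4) + 'I_(n.*2))%type.

Definition involutive_fpf (T : finType) (f : T -> T) : Prop :=
  (forall x, f (f x) = x) /\ (forall x, f x != x).

(* Rotation system of the graph obtained by collapsing the outside of B to  *)
(* a single vertex v_oo: counterclockwise at each crossing; around v_oo the *)
(* counterclockwise order is the clockwise order of the endpoints on dB.    *)
Definition trot (C : finType) (n : nat) (x : tdart C n) : tdart C n :=
  match x with
  | inl (c, k) => inl (c, ordS k)
  | inr j => inr (ordS j)
  end.

Definition trot_edge_rel (C : finType) (n : nat) (e : tdart C n -> tdart C n)
  : rel (tdart C n) :=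
  fun x y => (y == trot x) || (y == e x).

(* Planarity (genus 0 of every component, Euler's formula for the rotation  *)
(* system): #vertices - #edges + #faces = 2 #components.                    *)
Definition tplanar (C : finType) (n : nat) (e : tdart C n -> tdart C n) : Prop :=
  (fcard (@trot C n) predT + fcard (@trot C n \o e) predT)%N
  = ((#|tdart C n|)./2 + 2 * n_comp (trot_edge_rel e) predT)%N.

Definition tthrough (C : finType) (n : nat) (x : tdart C n) : tdart C n :=
  match x with
  | inl (c, k) => inl (c, ordS (ordS k))
  | inr j => inr j
  end.

Definition strand_rel (C : finType) (n : nat) (e : tdart C n -> tdart C n)
  : rel (tdart C n) :=
  fun x y => (y == e x) || (y == tthrough x).

Definition no_closed_component (C : finType) (n : nat)
  (e : tdart C n -> tdart C n) : Prop :=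
  forall c k, exists j : 'I_(n.*2), connect (strand_rel e) (inl (c, k)) (inr j).

Definition tangle_diagram (C : finType) (n : nat) (e : tdart C n -> tdart C n)
  : Prop :=
  [/\ involutive_fpf e, tplanar e & no_closed_component e].

(* A way of joining the 2n endpoints by pairwise disjoint planar arcs       *)
(* outside B: a non-crossing perfect matching of 'I_(2n).                   *)
Definition noncrossing_matching (n : nat) (m : 'I_(n.*2) -> 'I_(n.*2)) : Prop :=
  involutive_fpf m /\
  (forall i j : 'I_(n.*2), i < j < m i -> i < m j < m i).

Definition tclosure (C : finType) (n : nat) (e : tdart C n -> tdart C n)
  (m : 'I_(n.*2) -> 'I_(n.*2)) : diagram :=
  @Diagram (tdart C n) C
    (fun c k => inl (c, k))
    e
    (fun x => match x with inr j => inr (m j) | inl _ => x end).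

Definition tangle_adequate (C : finType) (n : nat) (e : tdart C n -> tdart C n)
  : Prop :=
  forall m, noncrossing_matching m -> adequate (tclosure e m).

(* The link diagram L_T.  The first copy of the darts is (B,T); the second  *)
(* copy is the mirror image of (B,T) (reflection of the disk, over/under     *)
(* information kept), so its counterclockwise slot order at each crossing   *)
(* is the reverse one: slot k of the mirror at c is the old slot -k (mod 4), which  *)
(* keeps slots 0,2 on the under-strand.  Endpoint j of T is glued to        *)
(* endpoint j of the mirror.                                                        *)
Definition neg4 (k : 'I_4) : 'I_4 := if odd k then ordS (ordS k) else k.

Definition LT (C : finType) (n : nat) (e : tdart C n -> tdart C n) : diagram :=
  @Diagram ((tdart C n) + (tdart C n))%type (C + C)%type
    (fun c k => match c with
                | inl c => inl (inl (c, k))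
                | inr c => inr (inl (c, neg4 k))
                end)
    (fun x => match x with inl y => inl (e y) | inr y => inr (e y) end)
    (fun x => match x with
              | inl (inr j) => inr (inr j)
              | inr (inr j) => inl (inr j)
              | _ => x
              end).

(* Main.v *)
Require Import Defs.
From mathcomp Require Import all_boot.
From mathcomp Require Import zify.
Set Implicit Arguments. Unset Strict Implicit. Unset Printing Implicit Defensive.


Inductive reach (R : nat -> nat -> Prop) : nat -> nat -> Prop :=
| r_refl x : reach R x x
| r_step x y : R x y -> reach R x y
| r_sym x y : reach R x y -> reach R y x
| r_trans x y z : reach R x y -> reach R y z -> reach R x z.

Lemma reach_mono (R R' : nat -> nat -> Prop) :
  (forall x y, R x y -> reach R' x y) -> forall x y, reach R x y -> reach R' x y.
Proof.
move=> H x y; elim=> {x y}.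
- move=> x; exact: r_refl.
- move=> x y; exact: H.
- move=> x y _; exact: r_sym.
- move=> x y z _ h1 _ h2; exact: r_trans h1 h2.
Qed.

Definition mstep (k : nat) (E : nat -> nat -> bool) (N : nat -> nat) x y : Prop :=
  x < k.*2 /\ y < k.*2 /\ (E x y \/ y = N x).

Definition good_match k (N : nat -> nat) :=
  (forall i, i < k.*2 -> [/\ N i < k.*2, N (N i) = i & N i <> i]) /\
  (forall i j, i < k.*2 -> j < k.*2 -> i < j < N i -> i < N j < N i).

Lemma count_iota2 (P : pred nat) a :
  count P (iota 0 a.+2) = count P (iota 0 a) + P a + P a.+1.
Proof. by rewrite -addn2 iotaD count_cat /= add0n addn0 addnA. Qed.

Lemma meander k : forall E : nat -> nat -> bool,
  (forall i, i < k.*2 -> E i i) ->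
  (forall i j, i < k.*2 -> j < k.*2 -> E i j -> E j i) ->
  (forall i j l, i < k.*2 -> j < k.*2 -> l < k.*2 -> E i j -> E j l -> E i l) ->
  (forall i, i < k.*2 -> ~~ odd (count (E i) (iota 0 k.*2))) ->
  exists N, good_match k N /\ forall i, i < k.*2 -> reach (mstep k E N) i 0.
Proof.
elim: k => [|k IH] E Er Es Et Ev.
  by exists id; split; [split|] => i.
rewrite doubleS in Er Es Et Ev *.
have [k0|kpos] := posnP k.
  subst k.
  exists (fun i => if i == 0 then 1 else 0); split; [split|].
  - by move=> i; case: i => [|[|]] //=.
  - by move=> i j; case: i => [|[|]] //=; case: j => [|[|]].
  - move=> i; case: i => [|[|]] // _.
    + exact: r_refl.
    + apply: r_sym; apply: r_step; rewrite /mstep /=; split=> //; split=> //; by right.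
set a := k.*2 in Er Es Et Ev *.
have aP : 2 <= a by rewrite /a; lia.
have Ea x : x < a.+2 -> E a x = E x a.
  move=> hx; apply/idP/idP; apply: Es => //; lia.
have Eb x : x < a.+2 -> E a.+1 x = E x a.+1.
  move=> hx; apply/idP/idP; apply: Es => //; lia.
case: (boolP (has (fun x => E x a || E x a.+1) (iota 0 a))) => [/hasP [x0 hx0 Ex0]|hnx].
-
  rewrite mem_iota add0n /= in hx0.
  pose E' := fun i j => E i j || ((E i a || E i a.+1) && (E j a || E j a.+1)).
  have Et' i j l : i < a.+2 -> j < a.+2 -> l < a.+2 -> E i j -> E j l -> E i l.
    by move=> *; apply: (Et i j l).
  have [N' [[Nok Nnc] Nre]] : exists N, good_match k N /\ forall i, i < k.*2 -> reach (mstep k E' N) i 0.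
    apply: IH.
    + by move=> i hi; rewrite /E' Er //; lia.
    + move=> i j hi hj; rewrite /E' => /orP [h|/andP [h1 h2]].
        by rewrite Es //; lia.
      by rewrite h1 h2 orbT.
    + move=> i j l hi hj hl; rewrite /E' => /orP [h|/andP [h1 h2]] /orP [h'|/andP [h1' h2']].
      * by rewrite (Et i j l) //; lia.
      * apply/orP; right; rewrite h2' andbT.
        case/orP: h1' => h1'; apply/orP; [left|right]; apply: (Et i j) => //; lia.
      * apply/orP; right; rewrite h1 /=.
        have hlj : E l j by apply: Es => //; lia.
        case/orP: h2 => h2; apply/orP; [left|right]; apply: (Et l j) => //; lia.
      * by rewrite h1 h2' orbT.
    + move=> i hi.
      have := Ev i (leqW (leqW hi)); rewrite count_iota2.
      case: (boolP (E i a || E i a.+1)) => hia.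
      * have -> : count (E' i) (iota 0 k.*2) = count (fun j => E j a || E j a.+1) (iota 0 a).
          apply: eq_in_count => j; rewrite mem_iota add0n => /= hj.
          rewrite /E' hia /=; apply/orP/idP => [[h|//]|]; last by right.
          have hji : E j i by apply: Es => //; lia.
          case/orP: hia => h'; apply/orP; [left|right]; apply: (Et j i) => //; lia.
        move=> _.
        case: (boolP (E a a.+1)) => hab.
        -- have -> : count (fun j => E j a || E j a.+1) (iota 0 a) = count (E a) (iota 0 a).
             apply: eq_in_count => j; rewrite mem_iota add0n => /= hj.
             rewrite Ea; last by lia.
             apply/orP/idP => [[//|h]|]; last by left.
             apply: (Et j a.+1) => //; try lia. rewrite Eb; [exact: hab|lia].
           have := Ev a (leqW (ltnSn _)); rewrite count_iota2 Er // hab.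
           by rewrite -addnA addn1 oddD addbF.
        -- have h0 := count_predUI (fun j => E j a) (fun j => E j a.+1) (iota 0 a).
           have e0 : count (predI (fun j => E j a) (fun j => E j a.+1)) (iota 0 a) = 0.
             apply/eqP; rewrite -leqn0 leqNgt -has_count; apply/hasP => [[j hj /andP[h1 h2]]].
             move: hj; rewrite mem_iota add0n /= => hj.
             move/negP: hab; apply; apply: (Et a j) => //; try lia. by rewrite Ea //; lia.
           rewrite e0 addn0 in h0.
           have -> : count (fun j => E j a || E j a.+1) (iota 0 a) = count (predU (fun j => E j a) (fun j => E j a.+1)) (iota 0 a) by [].
           rewrite h0.
           have e1 : count (fun j => E j a) (iota 0 a) = count (E a) (iota 0 a).
             apply: eq_in_count => j; rewrite mem_iota add0n => /= hj; rewrite Ea //; lia.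
           have e2 : count (fun j => E j a.+1) (iota 0 a) = count (E a.+1) (iota 0 a).
             apply: eq_in_count => j; rewrite mem_iota add0n => /= hj; rewrite Eb //; lia.
           rewrite e1 e2.
           have := Ev a (leqW (ltnSn _)); rewrite count_iota2 Er // (negbTE hab).
           have := Ev a.+1 (ltnSn _); rewrite count_iota2 Er // Eb // (negbTE hab).
           rewrite !oddD /=.
           by case: (odd (count (E a) _)); case: (odd (count (E a.+1) _)).
      * have -> : count (E' i) (iota 0 k.*2) = count (E i) (iota 0 a).
          apply: eq_count => j; by rewrite /E' (negbTE hia) orbF.
        by case/norP: hia => /negbTE -> /negbTE ->; rewrite !addn0.
  pose N := fun i => if i == a then a.+1 else if i == a.+1 then a else N' i.
  have ba : (a.+1 == a) = false by lia.
  have Nlt i : i < a -> N i = N' i.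
    by move=> hi; rewrite /N; case: eqP; [lia|]; case: eqP; [lia|].
  exists N; split; [split|].
  + move=> i hi.
    have [hia|hia] := ltnP i a.
      have [h1 h2 h3] := Nok i hia.
      by rewrite (Nlt i hia) (Nlt _ h1) h2 doubleS; split => //; lia.
    rewrite /N; have [->|] := eqP.
      by rewrite ba eqxx doubleS; split; lia.
    move=> ne; have -> : i = a.+1 by lia.
    by rewrite eqxx eqxx /=; split; [lia| |lia].
  + move=> i j hi hj /andP [hij hjN].
    have [hia|hia] := ltnP i a.
      have [h1 h2 h3] := Nok i hia.
      rewrite Nlt // in hjN *.
      have hja : j < a by lia.
      rewrite Nlt //; apply: Nnc => //.
      by rewrite hij.
    move: hjN; rewrite /N; case: eqP => [ei|ne]; [lia|].
    have -> : i = a.+1 by lia.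
    by rewrite eqxx; lia.
  + have toa x : x < a -> (E x a || E x a.+1) -> reach (mstep k.+1 E N) x a.
      move=> hx /orP [h|h].
        by apply: r_step; rewrite /mstep doubleS; split; [lia|split;[lia|left]].
      apply: (r_trans (y := a.+1)).
        by apply: r_step; rewrite /mstep doubleS; split; [lia|split;[lia|left]].
      apply: r_step; rewrite /mstep doubleS; split; [lia|split;[lia|right]].
      by rewrite /N ba eqxx.
    have low i : i < a -> reach (mstep k.+1 E N) i 0.
      move=> hi; apply: (reach_mono _ (Nre i hi)) => x y [hx [hy h]].
      case: h => [|->].
        rewrite /E' => /orP [h|/andP[h1 h2]].
          by apply: r_step; rewrite /mstep doubleS; split; [lia|split;[lia|left]].
        apply: (r_trans (y := a)); first exact: toa.
        by apply: r_sym; apply: toa.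
      apply: r_step; rewrite /mstep doubleS; split; [lia|split;[|right]].
        have := Nok x hx; case; lia.
      by rewrite Nlt.
    move=> i hi.
    have [hia|hia] := ltnP i a; first exact: low.
    have ra : reach (mstep k.+1 E N) a 0.
      apply: (r_trans (y := x0)); last exact: low.
      by apply: r_sym; apply: toa.
    have [->|ne] := eqVneq i a; first exact: ra.
    have -> : i = a.+1 by lia.
    apply: (r_trans (y := a)) => //.
    apply: r_step; rewrite /mstep doubleS; split; [lia|split;[lia|right]].
    by rewrite /N ba eqxx.
-
  have nE x : x < a -> (E x a = false) /\ (E x a.+1 = false).
    move=> hx; move/hasPn: hnx => /(_ x); rewrite mem_iota add0n => /(_ hx).
    by case/norP => /negbTE -> /negbTE ->.
  have Eab : E a a.+1.
    have := Ev a (leqW (ltnSn _)); rewrite count_iota2 Er //.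
    have -> : count (E a) (iota 0 a) = 0.
      apply/eqP; rewrite -leqn0 leqNgt -has_count; apply/hasP => [[j hj h]].
      move: hj; rewrite mem_iota add0n /= => hj.
      by rewrite Ea in h; [rewrite (nE j hj).1 in h|lia].
    by case: (E a a.+1).
  have [N' [[Nok Nnc] Nre]] : exists N, good_match k N /\ forall i, i < k.*2 -> reach (mstep k E N) i 0.
    apply: IH.
    + by move=> i hi; rewrite Er //; lia.
    + by move=> i j hi hj; apply: Es; lia.
    + by move=> i j l hi hj hl; apply: Et; lia.
    + move=> i hi; have := Ev i (leqW (leqW hi)); rewrite count_iota2.
      by have [-> ->] := nE i hi; rewrite !addn0.
  set q := a.-1.
  have hq : q < a by rewrite /q; lia.
  set p := N' q.
  have [hp1 hp2 hp3] := Nok q hq.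
  rewrite -/p in hp1 hp2 hp3.
  pose N := fun i => if i == p then a.+1 else if i == q then a else if i == a then q
                     else if i == a.+1 then p else N' i.
  have Noth i : i < a -> i != p -> i != q -> N i = N' i.
    move=> hi h1 h2; rewrite /N (negbTE h1) (negbTE h2).
    by case: eqP; [lia|]; case: eqP; [lia|].
  have Np : N p = a.+1 by rewrite /N eqxx.
  have Nq : N q = a by rewrite /N eqxx; case: eqP => //; lia.
  have Na : N a = q by rewrite /N eqxx; case: eqP; [lia|]; case: eqP; [lia|].
  have Nb : N a.+1 = p by rewrite /N eqxx; case: eqP; [lia|]; case: eqP; [lia|]; case: eqP; [lia|].
  have Noth' i : i < a -> i != p -> i != q -> [/\ N' i < a, N' i != p, N' i != q & N' i != i].
    move=> hi h1 h2; have [g1 g2 g3] := Nok i hi; split => //.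
    - by apply/eqP => e; move: h2; rewrite -g2 e hp2 eqxx.
    - by apply/eqP => e; move: h1; rewrite -g2 e -/p eqxx.
    - exact/eqP.
  exists N; split; [split|].
  + move=> i hi.
    have [->|ne1] := eqVneq i p; first by rewrite Np Nb; split; lia.
    have [->|ne2] := eqVneq i q; first by rewrite Nq Na; split; lia.
    have [->|ne3] := eqVneq i a; first by rewrite Na Nq; split; lia.
    have [->|ne4] := eqVneq i a.+1; first by rewrite Nb Np; split; lia.
    have hia : i < a by lia.
    have [g1 g2 g3 g4] := Noth' i hia ne1 ne2.
    rewrite Noth // Noth //; have [_ -> _] := Nok i hia; split => //; [lia| exact/eqP].
  + move=> i j hi hj /andP [hij hjN].
    have [ei|ne1] := eqVneq i p.
      subst i; rewrite Np in hjN *.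
      have [->|nj2] := eqVneq j q; first by rewrite Nq; lia.
      have [->|nj3] := eqVneq j a; first by rewrite Na; lia.
      have hja : j < q by lia.
      have [nj1 | //] := eqVneq j p; first by lia.
      rewrite Noth //; try lia.
      have := Nnc p j ltac:(lia) ltac:(lia); rewrite hp2 => /(_ ltac:(lia)); lia.
    have [ei|ne2] := eqVneq i q; first by subst i; rewrite Nq in hjN; lia.
    have [ei|ne3] := eqVneq i a; first by subst i; rewrite Na in hjN; lia.
    have [ei|ne4] := eqVneq i a.+1; first by subst i; rewrite Nb in hjN; lia.
    have hia : i < a by lia.
    have [g1 g2 g3 g4] := Noth' i hia ne1 ne2.
    rewrite Noth // in hjN *.
    have hNq : N' i < q by move/eqP: g3; lia.
    have [ej|nj1] := eqVneq j p.
      subst j; have := Nnc i p hia hp1; rewrite hp2 => /(_ ltac:(lia)); lia.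
    have [ej|nj2] := eqVneq j q; first by lia.
    rewrite Noth //; try lia.
    apply: Nnc => //; lia.
  + have stepE x y : x < a.+2 -> y < a.+2 -> E x y -> reach (mstep k.+1 E N) x y.
      by move=> hx hy h; apply: r_step; rewrite /mstep doubleS; split; [lia|split;[lia|left]].
    have stepN x : x < a.+2 -> N x < a.+2 -> reach (mstep k.+1 E N) x (N x).
      by move=> hx hy; apply: r_step; rewrite /mstep doubleS; split; [lia|split;[lia|right]].
    have pq : reach (mstep k.+1 E N) p q.
      apply: (r_trans (y := a.+1)); first by rewrite -Np; apply: stepN; lia.
      apply: (r_trans (y := a)); first by apply: stepE => //; rewrite Eb // -Ea.
      by rewrite -Na; apply: stepN; lia.
    have low i : i < a -> reach (mstep k.+1 E N) i 0.
      move=> hi; apply: (reach_mono _ (Nre i hi)) => x y [hx [hy h]].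
      case: h => [h|->]; first by apply: stepE => //; lia.
      have [ex|ne1] := eqVneq x p; first by subst x; rewrite hp2.
      have [ex|ne2] := eqVneq x q; first by subst x; exact: r_sym.
      rewrite -/a in hx hy; have e := Noth x hx ne1 ne2; rewrite -e; apply: stepN; [lia|rewrite e; have := Nok x hx; case; lia].
    move=> i hi.
    have [hia|hia] := ltnP i a; first exact: low.
    have [->|ne] := eqVneq i a.
      apply: (r_trans (y := q)); last exact: low.
      by rewrite -Na; apply: stepN; lia.
    have -> : i = a.+1 by lia.
    apply: (r_trans (y := p)); last exact: low.
    by rewrite -Nb; apply: stepN; lia.
Qed.


Lemma neg4_rp b (k : 'I_4) : neg4 (res_partner b k) = res_partner (~~ b) (neg4 k).
Proof. by apply/val_inj; case: b; case: k => [[|[|[|[|]]]] ?]. Qed.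
Lemma neg4K (k : 'I_4) : neg4 (neg4 k) = k.
Proof. by apply/val_inj; case: k => [[|[|[|[|]]]] ?]. Qed.
Lemma rpK b (k : 'I_4) : res_partner b (res_partner b k) = k.
Proof. by apply/val_inj; case: b; case: k => [[|[|[|[|]]]] ?]. Qed.
Lemma rp_neq b (k : 'I_4) : res_partner b k != k.
Proof. by case: b; case: k => [[|[|[|[|]]]] ?]. Qed.
Lemma s0E : s0 = Ordinal (isT : 0 < 4). Proof. by apply/val_inj; rewrite /= inordK. Qed.
Lemma s1E : s1 = Ordinal (isT : 1 < 4). Proof. by apply/val_inj; rewrite /= inordK. Qed.
Lemma s2E : s2 = Ordinal (isT : 2 < 4). Proof. by apply/val_inj; rewrite /= inordK. Qed.
Lemma s3E : s3 = Ordinal (isT : 3 < 4). Proof. by apply/val_inj; rewrite /= inordK. Qed.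
Lemma neg4s : neg4 s0 = s0 /\ neg4 s1 = s3 /\ neg4 s2 = s2 /\ neg4 s3 = s1.
Proof. rewrite s0E s1E s2E s3E. by split; [|split; [|split]]; apply/val_inj. Qed.
Lemma rps : [/\ res_partner true s0 = s1, res_partner true s3 = s2,
  res_partner false s1 = s2 & res_partner false s0 = s3].
Proof. rewrite s0E s1E s2E s3E. by split; apply/val_inj. Qed.

Lemma smooth_tc (C : finType) n (e : tdart C n -> tdart C n) m b (x : tdart C n) :
  @smooth (tclosure e m) (fun _ => b) x =
  match x with inl (c, k) => inl (c, res_partner b k) | inr j => inr (m j) end.
Proof.
rewrite /smooth; case: pickP => [[c k] /= /eqP <- // | H].
case: x H => [[c k]|j] H //.
by move: (H (c, k)); rewrite /= eqxx.
Qed.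

Lemma smooth_LT (C : finType) n (e : tdart C n -> tdart C n) b (x : dart (LT e)) :
  @smooth (LT e) (fun _ => b) x =
  match x with
  | inl (inl (c,k)) => inl (inl (c, res_partner b k))
  | inr (inl (c,k)) => inr (inl (c, res_partner (~~ b) k))
  | inl (inr j) => inr (inr j)
  | inr (inr j) => inl (inr j) end.
Proof.
rewrite /smooth; case: pickP => [[[c|c] k] /= /eqP <- // | H].
  by rewrite neg4_rp.
case: x H => [[[c k]|j]|[[c k]|j]] H //.
  by move: (H (inl c, k)); rewrite /= eqxx.
by move: (H (inr c, neg4 k)); rewrite /= neg4K eqxx.
Qed.

Lemma connect_inv (T : finType) (r : rel T) (P : T -> Prop) x :
  P x -> (forall y z, P y -> r y z -> P z) -> forall y, connect r x y -> P y.
Proof.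
move=> Px H y /connectP [p]; elim: p x Px => [|z p IH] x Px /=; first by move=> _ ->.
by case/andP => rxz pth ey; apply: (IH z (H x z Px rxz) pth ey).
Qed.

Lemma LT_left (C : finType) n (e : tdart C n -> tdart C n) b m
  (Hall : forall j j', connect (@res_rel (tclosure e m) (fun _ => b)) (inr j) (inr j'))
  x y :
  connect (@res_rel (LT e) (fun _ => b)) (inl x) (inl y) ->
  connect (@res_rel (tclosure e m) (fun _ => b)) x y.
Proof.
set R := @res_rel (tclosure e m) (fun _ => b).
pose P (z : dart (LT e)) : Prop :=
  match z with inl w => connect R x w | inr _ => exists j, connect R x (inr j) end.
move=> H; apply: (connect_inv (P := P) _ _ H); first exact: connect0.
move=> [w|u] z Pz /orP [/eqP ->|/eqP ->] /=.
- apply: connect_trans Pz (connect1 _); by rewrite /R /res_rel /= eqxx.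
- rewrite smooth_LT; case: w Pz => [[c k]|j] Pz /=.
    apply: connect_trans Pz (connect1 _); by rewrite /R /res_rel /= smooth_tc eqxx orbT.
  by exists j.
- exact: Pz.
- rewrite smooth_LT; case: u Pz => [[c k]|j] [j0 Pz] /=; first by exists j0.
  exact: connect_trans Pz (Hall j0 j).
Qed.

Lemma LT_right (C : finType) n (e : tdart C n -> tdart C n) b m
  (Hall : forall j j', connect (@res_rel (tclosure e m) (fun _ => ~~ b)) (inr j) (inr j'))
  x y :
  connect (@res_rel (LT e) (fun _ => b)) (inr x) (inr y) ->
  connect (@res_rel (tclosure e m) (fun _ => ~~ b)) x y.
Proof.
set R := @res_rel (tclosure e m) (fun _ => ~~ b).
pose P (z : dart (LT e)) : Prop :=
  match z with inr w => connect R x w | inl _ => exists j, connect R x (inr j) end.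
move=> H; apply: (connect_inv (P := P) _ _ H); first exact: connect0.
move=> [u|w] z Pz /orP [/eqP ->|/eqP ->] /=.
- exact: Pz.
- rewrite smooth_LT; case: u Pz => [[c k]|j] [j0 Pz] /=; first by exists j0.
  exact: connect_trans Pz (Hall j0 j).
- apply: connect_trans Pz (connect1 _); by rewrite /R /res_rel /= eqxx.
- rewrite smooth_LT; case: w Pz => [[c k]|j] Pz /=.
    apply: connect_trans Pz (connect1 _); by rewrite /R /res_rel /= smooth_tc eqxx orbT.
  by exists j.
Qed.

Lemma tc_sym (C : finType) n (e : tdart C n -> tdart C n) m b :
  involutive_fpf e -> (forall j, m (m j) = j) ->
  connect_sym (@res_rel (tclosure e m) (fun _ => b)).
Proof.
move=> [eK _] mK; apply: sym_connect_sym.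
have smK (x : tdart C n) : @smooth (tclosure e m) (fun _ => b) (@smooth (tclosure e m) (fun _ => b) x) = x.
  by rewrite !smooth_tc; case: x => [[c k]|j]; rewrite ?rpK ?mK.
suff H : forall x y, @res_rel (tclosure e m) (fun _ => b) x y -> @res_rel (tclosure e m) (fun _ => b) y x.
  by move=> x y; apply/idP/idP; apply: H.
move=> x y /orP [/eqP ->|/eqP ->]; rewrite /res_rel /=.
  by rewrite eK eqxx.
by rewrite smK eqxx orbT.
Qed.


Lemma inv_even (T : finType) (f : T -> T) : (forall x, f (f x) = x) ->
  forall A : {set T}, {in A, forall x, f x \in A} -> {in A, forall x, f x != x} ->
  ~~ odd #|A|.
Proof.
move=> fK A; move: {2}#|A| (leqnn #|A|) => k; elim: k A => [|k IH] A hA cl fp.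
  by move: hA; rewrite leqn0 => /eqP ->.
have [A0|[x xA]] := set_0Vmem A; first by rewrite A0 cards0.
set A' := A :\ x :\ f x.
have fxA : f x \in A :\ x by rewrite !inE fp // cl.
have cA : #|A| = #|A'|.+2.
  by rewrite (cardsD1 x A) xA (cardsD1 (f x) (A :\ x)) fxA.
have finj : injective f by apply: (can_inj fK).
rewrite cA /= negbK.
apply: IH; first by move: hA; rewrite cA ltnS; apply: ltnW.
- move=> y; rewrite !inE => /and3P [h1 h2 h3].
  rewrite cl // andbT; apply/andP; split.
    by apply/eqP => e; move/eqP: h2; apply; exact: finj e.
  by apply/eqP => e; move/eqP: h1; apply; rewrite -(fK y) e.
- by move=> y; rewrite !inE => /and3P [_ _ h3]; apply: fp.
Qed.

Definition smB (C : finType) n b (x : tdart C n) : tdart C n :=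
  match x with inl (c, k) => inl (c, res_partner b k) | inr j => inr j end.
Definition relB (C : finType) n (e : tdart C n -> tdart C n) b : rel (tdart C n) :=
  fun x y => (y == e x) || (y == smB b x).

Lemma relB_sym (C : finType) n (e : tdart C n -> tdart C n) b :
  involutive_fpf e -> connect_sym (relB e b).
Proof.
move=> [eK _]; apply: sym_connect_sym.
have smK (x : tdart C n) : smB b (smB b x) = x by case: x => [[c k]|j] //=; rewrite rpK.
suff H : forall x y, relB e b x y -> relB e b y x by move=> x y; apply/idP/idP; apply: H.
move=> x y /orP [/eqP ->|/eqP ->]; rewrite /relB.
  by rewrite eK eqxx.
by rewrite smK eqxx orbT.
Qed.

Lemma relB_sub (C : finType) n (e : tdart C n -> tdart C n) b m x y :
  connect (relB e b) x y -> connect (@res_rel (tclosure e m) (fun _ => b)) x y.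
Proof.
apply: connect_sub => u v /orP [/eqP ->|/eqP ->].
  by apply: connect1; rewrite /res_rel /= eqxx.
case: u => [[c k]|j] /=; last exact: connect0.
by apply: connect1; rewrite /res_rel /= smooth_tc eqxx orbT.
Qed.

Lemma endpoints_even (C : finType) n (e : tdart C n -> tdart C n) b (j0 : 'I_(n.*2)) :
  involutive_fpf e ->
  ~~ odd #|[set j : 'I_(n.*2) | connect (relB e b) (inr j0) (inr j)]|.
Proof.
move=> [eK efp].
set K := [set y | connect (relB e b) (inr j0) y].
have clK (f : tdart C n -> tdart C n) : (forall y, relB e b y (f y)) -> {in K, forall y, f y \in K}.
  by move=> hf y; rewrite !inE => h; apply: connect_trans h (connect1 (hf y)).
have h1 : ~~ odd #|K|.
  apply: (inv_even eK); first by apply: clK => y; rewrite /relB eqxx.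
  by move=> y _; apply: efp.
set L := [set y : tdart C n | if y is inl _ then true else false].
have smK (x : tdart C n) : smB b (smB b x) = x by case: x => [[c k]|j] //=; rewrite rpK.
have h2 : ~~ odd #|K :&: L|.
  apply: (inv_even smK).
    move=> y; rewrite inE => /andP [yK yL]; rewrite inE.
    apply/andP; split; first by apply: clK yK => z; rewrite /relB eqxx orbT.
    by move: yL; rewrite !inE; case: y {yK} => [[c k]|j].
  move=> y; rewrite !inE => /andP [_]; case: y => [[c k]|j] // _ /=.
  by apply/eqP => [[/eqP]]; apply/negP; apply: rp_neq.
have h3 : K :\: L = inr @: [set j : 'I_(n.*2) | connect (relB e b) (inr j0) (inr j)].
  apply/setP => y; rewrite !inE; case: y => [[c k]|j] /=.
    by apply/esym/imsetP => [[j _]].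
  apply/idP/imsetP => [h|[j' h [->]]]; last by rewrite inE in h.
  by exists j; rewrite // inE.
have := cardsID L K; rewrite h3 card_imset; last by move=> u v [].
move=> hc; move: h1; rewrite -hc oddD.
by rewrite (negbTE h2).
Qed.


Lemma card_count (T : finType) (P : pred T) : #|P| = count P (enum T).
Proof. rewrite cardE /enum_mem size_filter /enum_mem count_filter. by apply: eq_count => x; rewrite /= !inE andbT. Qed.
Lemma card_count' (T : finType) (P : pred T) : #|[set x | P x]| = count P (enum T).
Proof. rewrite card_count; apply: eq_count => x. by change ((x \in [set x0 | P x0]) = P x); rewrite inE. Qed.

Lemma exists_m (C : finType) n (e : tdart C n -> tdart C n) b :
  involutive_fpf e -> exists m, noncrossing_matching m /\
  forall j j', connect (@res_rel (tclosure e m) (fun _ => b)) (inr j) (inr j').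
Proof.
move=> he.
pose E (i j : nat) : bool :=
  if (insub i : option 'I_(n.*2)) is Some i' then
    (if (insub j : option 'I_(n.*2)) is Some j' then connect (relB e b) (inr i') (inr j') else false)
  else false.
have EE (i j : 'I_(n.*2)) : E i j = connect (relB e b) (inr i) (inr j) by rewrite /E !valK.
have [N [[Nok Nnc] Nre]] : exists N, good_match n N /\ forall i, i < n.*2 -> reach (mstep n E N) i 0.
  apply: meander.
  - by move=> i hi; have -> : i = val (Ordinal hi) by []; rewrite EE connect0.
  - move=> i j hi hj; have -> : i = val (Ordinal hi) by []; have -> : j = val (Ordinal hj) by [].
    by rewrite !EE (relB_sym b he).
  - move=> i j l hi hj hl; have -> : i = val (Ordinal hi) by [].
    have -> : j = val (Ordinal hj) by []; have -> : l = val (Ordinal hl) by [].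
    rewrite !EE; exact: connect_trans.
  - move=> i hi; have -> : i = val (Ordinal hi) by [].
    have := endpoints_even b (Ordinal hi) he.
    rewrite -val_enum_ord count_map card_count'.
    have -> : count (preim val (E (Ordinal hi))) (enum 'I_(n.*2)) =
              count (fun j => connect (relB e b) (inr (Ordinal hi)) (inr j)) (enum 'I_(n.*2)).
      by apply: eq_count => j; exact: EE.
    by [].
pose m (j : 'I_(n.*2)) : 'I_(n.*2) := insubd j (N j).
have mv j : val (m j) = N j.
  by rewrite val_insubd; have [h _ _] := Nok j (ltn_ord j); rewrite h.
have mK j : m (m j) = j.
  by apply/val_inj; rewrite mv mv; have [_ h _] := Nok j (ltn_ord j).
exists m; split.
  split; first split.
  - exact: mK.
  - move=> j; apply/eqP => h; have [_ _ h3] := Nok j (ltn_ord j).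
    by apply: h3; rewrite -mv h.
  - move=> i j; rewrite !mv; apply: Nnc; exact: ltn_ord.
have Hsym := tc_sym b he mK.
have key (j0 : 'I_(n.*2)) : forall x y, reach (mstep n E N) x y -> x = y \/
   [/\ x < n.*2, y < n.*2 &
   connect (@res_rel (tclosure e m) (fun _ => b)) (inr (insubd j0 x)) (inr (insubd j0 y))].
  move=> x y; elim => {x y}.
  - by move=> x; left.
  - move=> x y [hx [hy h]]; right; split => //.
    have ex : insubd j0 x = Ordinal hx by apply/val_inj; rewrite val_insubd hx.
    have ey : insubd j0 y = Ordinal hy by apply/val_inj; rewrite val_insubd hy.
    rewrite ex ey; case: h => [h|ey'].
      by apply: relB_sub; rewrite -EE.
    apply: connect1; rewrite /res_rel /= smooth_tc; apply/orP; right.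
    by apply/eqP; congr inr; apply/val_inj; rewrite mv /=; exact: ey'.
  - move=> x y _ [->|[hx hy h]]; first by left.
    by right; split => //; rewrite Hsym.
  - move=> x y z _ [e1|[hx hy h1]] _ [e2|[hy' hz h2]].
    + by left; rewrite e1 e2.
    + by rewrite e1; right.
    + by rewrite -e2; right.
    + by right; split => //; exact: connect_trans h1 h2.
move=> j j'.
have r : reach (mstep n E N) j j'.
  apply: (r_trans (y := 0)); first exact: Nre.
  by apply: r_sym; apply: Nre.
case: (key j _ _ r) => [/val_inj ->|[_ _ h]]; first exact: connect0.
by move: h; rewrite !valKd.
Qed.


Theorem mainTheorem1 (n : nat) (C : finType) (e : tdart C n -> tdart C n) :
  tangle_diagram e -> tangle_adequate e -> adequate (LT e).
Proof.
case=> he _ _ Had.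
have [mT [hmT HT]] := exists_m true he.
have [mF [hmF HF]] := exists_m false he.
have [AT _] := Had mT hmT.
have [_ AF] := Had mF hmF.
have [r1 r2 r3 r4] := rps.
have [n0 [n1 [n2 n3]]] := neg4s.
have symT := tc_sym true he hmT.1.1.
have symF := tc_sym false he hmF.1.1.
split.
- move=> [c|c]; apply/negP => h.
  + have h' := LT_left HT h.
    by move/negP: (AT c); apply.
  + rewrite /same_circle /= n0 n2 in h.
    have h' := LT_right (b := true) HF h.
    move/negP: (AF c); apply; rewrite /same_circle /=.
    apply: (connect_trans (y := inl (c, s2))).
      by apply: connect1; rewrite /res_rel /= smooth_tc r3 eqxx orbT.
    apply: (connect_trans (y := inl (c, s0))); first by rewrite symF.
    by apply: connect1; rewrite /res_rel /= smooth_tc r4 eqxx orbT.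
- move=> [c|c]; apply/negP => h.
  + have h' := LT_left HF h.
    by move/negP: (AF c); apply.
  + rewrite /same_circle /= n1 n3 in h.
    have h' := LT_right (b := false) HT h.
    move/negP: (AT c); apply; rewrite /same_circle /=.
    apply: (connect_trans (y := inl (c, s1))).
      by apply: connect1; rewrite /res_rel /= smooth_tc r1 eqxx orbT.
    apply: (connect_trans (y := inl (c, s3))); first by rewrite symT.
    by apply: connect1; rewrite /res_rel /= smooth_tc r2 eqxx orbT.
Qed.
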